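(* Let $n \geq 1$ and let \[ P(z,\bar z) = \sum_{j=0}^n \alpha_{j,n-j} z^j \bar z^{\,n-j} + P_{n-1}(z,\bar z) \] be a polyanalytic polynomial, where $\alpha_{j,n-j}\in\mathbb{C}$ and $P_{n-1}$ is a polyanalytic polynomial with $\deg(P_{n-1}) \leq n-1$. Suppose there exists $\ell \in \{0,1,\ldots,n\}$ with $2\ell \neq n$ such that \[ |\alpha_{\ell,n-\ell}| > \sum_{j=0,\, j\neq \ell}^n |\alpha_{j,n-j}|. \] Then $P$ has at least one zero in $\mathbb{C}$. In particular, every polyanalytic polynomial of the form $P(z,\bar z) = \alpha_{\ell,n-\ell} z^\ell \bar z^{\,n-\ell} + P_{n-1}(z,\bar z)$ with $n\geq 1$, $\alpha_{\ell,n-\ell}\neq 0$, $2\ell\neq n$ and $\deg(P_{n-1})\leq n-1$ has at least one zero.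
   Context: A polyanalytic polynomial is a function $\mathbb{C}\to\mathbb{C}$ of the form $P(z,\bar z)=\sum_{k=0}^n\sum_{j=0}^k \alpha_{j,k-j} z^j \bar z^{\,k-j}$ with complex coefficients $\alpha_{j,k-j}$ (i.e. a polynomial in $z$ and $\bar z$); two such polynomials are equal iff all coefficients agree. Its degree $\deg(P)$ is the largest $j+k$ such that the coefficient of $z^j\bar z^k$ is nonzero. A zero of $P$ is a point $z\in\mathbb{C}$ with $P(z,\bar z)=0$. *)

(* Defs.v *)
From HB Require Import structures.
From mathcomp Require Import all_boot all_order all_algebra.
From mathcomp Require Import reals.
From mathcomp Require Export complex.
Set Implicit Arguments. Unset Strict Implicit. Unset Printing Implicit Defensive.
Import Order.TTheory GRing.Theory Num.Theory.
Local Open Scope ring_scope.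

Definition polyan_eval (R : realType) (n : nat) (alpha : nat -> nat -> R[i])
  (z : R[i]) : R[i] :=
  \sum_(k < n.+1) \sum_(j < k.+1) alpha j (k - j)%N * z ^+ j * (z^*) ^+ (k - j)%N.

(* Main.v *)
Require Import Defs.
From HB Require Import structures.
From mathcomp Require Import all_boot all_order all_algebra.
From mathcomp Require Import reals complex.
From mathcomp Require Import all_classical all_reals all_analysis.
From mathcomp Require Import ring lra.
Import Order.TTheory GRing.Theory Num.Theory.
Import numFieldNormedType.Exports.
Local Open Scope classical_set_scope.
Local Open Scope ring_scope.
Section Ang.
Context {R : realType}.
Local Notation C := R[i].
Local Notation Re := (@complex.Re R).
Local Notation Im := (@complex.Im R).

Lemma cos_gt0_itv (s : R) : - pi < s < pi -> 0 < cos s -> - (pi / 2) < s < pi / 2.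
Proof.
move=> /andP[s1 s2] cs.
have pi0 := pi_gt0 R.
apply/andP; split; rewrite ltNge; apply/negP => hs.
- have : 0 <= sin (- s - pi / 2).
    apply: sin_ge0_pi; apply/andP; split; lra.
  rewrite sinB sinN cosN cos_pihalf sin_pihalf; lra.
- have : 0 <= sin (s - pi / 2).
    apply: sin_ge0_pi; apply/andP; split; lra.
  rewrite sinB cos_pihalf sin_pihalf; lra.
Qed.

Lemma atanD (a b : R) : a * b < 1 -> atan a + atan b = atan ((a + b) / (1 - a * b)).
Proof.
move=> ab.
have [/andP[A1 A2] tA] := atan_def a.
have [/andP[B1 B2] tB] := atan_def b.
have cA : 0 < cos (atan a) by apply: cos_gt0_pihalf; rewrite A1 A2.
have cB : 0 < cos (atan b) by apply: cos_gt0_pihalf; rewrite B1 B2.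
have cAB : 0 < cos (atan a + atan b).
  have e1 : sin (atan a) = a * cos (atan a).
    by rewrite -{2}tA /tan mulrAC -mulrA divff ?mulr1 // gt_eqF.
  have e2 : sin (atan b) = b * cos (atan b).
    by rewrite -{2}tB /tan mulrAC -mulrA divff ?mulr1 // gt_eqF.
  rewrite cosD e1 e2.
  have -> : cos (atan a) * cos (atan b) - a * cos (atan a) * (b * cos (atan b))
     = cos (atan a) * cos (atan b) * (1 - a * b) by ring.
  apply: mulr_gt0; [exact: mulr_gt0|lra].
have pi0 := pi_gt0 R.
have hs : - (pi / 2) < atan a + atan b < pi / 2.
  by apply: cos_gt0_itv => //; apply/andP; split; lra.
have := tanD (lt0r_neq0 cA) (lt0r_neq0 cB); rewrite tA tB => <-.
by rewrite tanK // in_itv /= hs.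
Qed.

Definition ang (w : C) : R := atan (Im w / Re w).

Lemma ang_mul (x y : C) : 0 < Re x -> 0 < Re y -> 0 < Re (x * y) ->
  ang (x * y) = ang x + ang y.
Proof.
case: x => a b; case: y => c d /= a0 c0 h.
have ac0 : 0 < a * c by apply: mulr_gt0.
rewrite /ang /= atanD.
  congr atan; field.
  by rewrite !lt0r_neq0 //= subr_gt0 -subr_gt0.
have -> : b / a * (d / c) = (b * d) / (a * c) by field; rewrite !lt0r_neq0.
by rewrite ltr_pdivrMr // mul1r -subr_gt0.
Qed.

Lemma ang1 : ang 1 = 0.
Proof. by rewrite /ang /= mul0r atan0. Qed.


Local Notation nc := (@Normc.normc R).

Lemma nc_ge0 (z : C) : 0 <= nc z.
Proof. by case: z => a b; rewrite /= sqrtr_ge0. Qed.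

Lemma ncD (z w : C) : nc (z + w) <= nc z + nc w.
Proof. exact: le_normcD. Qed.

Lemma ncN (z : C) : nc (- z) = nc z.
Proof. exact: normcN. Qed.

Lemma ncB (z w : C) : nc (z - w) = nc (w - z).
Proof. by rewrite -ncN opprB. Qed.

Lemma ncBle (z w : C) : nc (z - w) <= nc z + nc w.
Proof. by have := ncD z (- w); rewrite ncN. Qed.

Lemma ncM (z w : C) : nc (z * w) = nc z * nc w.
Proof. exact: Normc.normcM. Qed.

Lemma ncV (z : C) : nc (z^-1) = (nc z)^-1.
Proof. exact: Normc.normcV. Qed.

Lemma nc_eq0 (z : C) : (nc z == 0) = (z == 0).
Proof.
apply/eqP/eqP; first exact: Normc.eq0_normc.
by move=> ->; exact: Normc.normc0.
Qed.

Lemma nc1 : nc 1 = 1.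
Proof. exact: Normc.normc1. Qed.

Lemma ncX (z : C) k : nc (z ^+ k) = nc z ^+ k.
Proof. by elim: k => [|k IH]; rewrite ?expr0 ?nc1 // !exprS ncM IH. Qed.

Lemma nc_real (x : R) : nc (x%:C)%C = `|x|.
Proof. by rewrite /= expr0n /= addr0 sqrtr_sqr. Qed.

Lemma ncRe (z : C) : `|Re z| <= nc z.
Proof.
case: z => a b /=; rewrite -sqrtr_sqr ler_wsqrtr //.
by rewrite lerDl sqr_ge0.
Qed.

Lemma nc_le (a b : R) : nc (Complex a b) <= `|a| + `|b|.
Proof.
have -> : Complex a b = (a%:C)%C + (b%:C)%C * 'i%C.
  by apply/eqP; rewrite eq_complex /= !mulr0 !mul0r !mulr1 !subr0 !addr0 add0r !eqxx.
by rewrite (le_trans (ncD _ _)) // ncM !nc_real /= expr0n expr1n /= add0r sqrtr1 mulr1.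
Qed.

Lemma Re_gt0 (z : C) : nc (z - 1) < 1 -> 0 < Re z.
Proof.
case: z => a b h; have := ncRe ((Complex a b) - 1).
rewrite /= => h2.
have : `|a + - 1| < 1 by exact: le_lt_trans h2 h.
rewrite ltr_norml; lra.
Qed.

Lemma ratio_close (x y : C) (e : R) : y != 0 -> nc (x - y) <= e * nc y ->
  nc (x / y - 1) <= e.
Proof.
move=> y0 h.
have ny : 0 < nc y by rewrite lt0r nc_ge0 nc_eq0 y0.
have -> : x / y - 1 = (x - y) / y by field.
by rewrite ncM ncV ler_pdivrMr.
Qed.

Definition wind (N : nat) (a : nat -> C) : R := \sum_(i < N) ang (a i.+1 / a i).

Lemma wind_step (x v w : C) : nc (x - 1) <= 1/4 -> nc (v - 1) <= 1/4 -> v = x * w ->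
  0 < Re x /\ 0 < Re v /\ 0 < Re w.
Proof.
move=> hx hv e.
have Rx : 0 < Re x by apply: Re_gt0; lra.
split => //; split; first by apply: Re_gt0; lra.
have x0 : x != 0 by apply: contraTneq Rx => ->; rewrite ltxx.
have nx : 3/4 <= nc x.
  have := ncD (1 - x) x; rewrite subrK nc1 ncB; lra.
have -> : w = v / x by rewrite e; field.
apply: Re_gt0.
have -> : v / x - 1 = (v - x) / x by field.
rewrite ncM ncV.
have hvx : nc (v - x) <= 1/2.
  have -> : v - x = (v - 1) - (x - 1) by ring.
  by rewrite (le_trans (ncBle _ _)) //; lra.
have nx0 : 0 < nc x by lra.
rewrite ltr_pdivrMr //; lra.
Qed.

Lemma wind_stable (N : nat) (a b : nat -> C) :
  a N = a 0%N -> b N = b 0%N ->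
  (forall i, (i <= N)%N -> a i != 0) -> (forall i, (i <= N)%N -> b i != 0) ->
  (forall i, (i < N)%N -> nc (a i.+1 / a i - 1) <= 1/4) ->
  (forall i, (i < N)%N -> nc (b i.+1 / b i - 1) <= 1/4) ->
  (forall i, (i <= N)%N -> 0 < Re (b i / a i)) ->
  wind N a = wind N b.
Proof.
move=> aN bN a0 b0 ha hb hy.
pose y i := b i / a i.
have step : forall i, (i < N)%N ->
  ang (b i.+1 / b i) = ang (a i.+1 / a i) + (ang (y i.+1) - ang (y i)).
  move=> i iN.
  have ai := a0 i (ltnW iN); have ai1 := a0 i.+1 iN.
  have bi := b0 i (ltnW iN); have bi1 := b0 i.+1 iN.
  pose w := y i.+1 / y i.
  have yi0 : y i != 0 by rewrite /y mulf_neq0 ?invr_eq0.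
  have ev : b i.+1 / b i = (a i.+1 / a i) * w.
    rewrite /w /y; field; rewrite ai bi //.
  have [Rx [Rv Rw]] := wind_step _ _ _ (ha i iN) (hb i iN) ev.
  have Ryi := hy i (ltnW iN); have Ryi1 := hy i.+1 iN.
  have ey : y i.+1 = y i * w by rewrite /w; field.
  rewrite ev (ang_mul _ _ Rx Rw) -?ev // ey (ang_mul _ _ Ryi Rw) -?ey //; ring.
rewrite /wind.
rewrite [RHS](eq_bigr (fun i : 'I_N => ang (a i.+1 / a i) + (ang (y i.+1) - ang (y i)))); last first.
  by move=> i _; apply: step.
rewrite big_split /= -[X in _ + X](big_mkord xpredT (fun i => ang (y i.+1) - ang (y i))).
rewrite telescope_sumr // /y aN bN subrr addr0 //.
Qed.


Definition ex (t : R) : C := Complex (cos t) (sin t).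

Lemma exD s t : ex (s + t) = ex s * ex t.
Proof.
apply/eqP; rewrite eq_complex /= cosD sinD; apply/andP; split; apply/eqP; ring.
Qed.

Lemma ex0 : ex 0 = 1.
Proof. by apply/eqP; rewrite eq_complex /= cos0 sin0 !eqxx. Qed.

Lemma ex2pi : ex (pi *+ 2) = 1.
Proof. by apply/eqP; rewrite eq_complex /= cos2pi sin2pi !eqxx. Qed.

Lemma nc_ex t : nc (ex t) = 1.
Proof. by rewrite /= cos2Dsin2 sqrtr1. Qed.

Lemma ex_neq0 t : ex t != 0.
Proof. by rewrite -nc_eq0 nc_ex oner_eq0. Qed.

Lemma conj_ex t : (ex t)^* = ex (- t).
Proof. by apply/eqP; rewrite eq_complex /= cosN sinN !eqxx. Qed.

Lemma ang_ex t : - (pi / 2) < t < pi / 2 -> ang (ex t) = t.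
Proof. by move=> ht; rewrite /ang /= -/(tan t) tanK // in_itv /= ht. Qed.

Lemma wind_const N (a : nat -> C) c : c != 0 -> (forall i, (i <= N)%N -> a i = c) ->
  wind N a = 0.
Proof.
move=> c0 h; rewrite /wind big1 // => i _.
by rewrite !h ?divff ?ang1 // ltnW.
Qed.

Lemma wind_ex N (c : C) (t : R) : c != 0 -> - (pi / 2) < t < pi / 2 ->
  wind N (fun j => c * ex (j%:R * t)) = N%:R * t.
Proof.
move=> c0 ht; rewrite /wind.
rewrite (eq_bigr (fun _ => t)) ?sumr_const ?card_ord ?mulr_natl // => i _.
rewrite -addn1 natrD mulrDl mul1r exD.
have e0 := ex_neq0 (i%:R * t).
have -> : c * (ex (i%:R * t) * ex t) / (c * ex (i%:R * t)) = ex t by field; rewrite c0 e0.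
exact: ang_ex.
Qed.


Lemma nc0 : nc 0 = 0.
Proof. by apply/eqP; rewrite nc_eq0. Qed.

Lemma nc_conj (z : C) : nc (z^*) = nc z.
Proof. by case: z => a b; rewrite /= sqrrN. Qed.

Lemma nc_sum (I : Type) (r : seq I) (Pp : pred I) (F : I -> C) :
  nc (\sum_(i <- r | Pp i) F i) <= \sum_(i <- r | Pp i) nc (F i).
Proof.
elim/big_rec2: _ => [|i y1 y2 _ h]; first by rewrite nc0.
by rewrite (le_trans (ncD _ _)) // lerD2l.
Qed.

Lemma ncXB (x y : C) (r : R) a : 1 <= r -> nc x <= r -> nc y <= r ->
  nc (x ^+ a - y ^+ a) <= a%:R * r ^+ a * nc (x - y).
Proof.
move=> r1 hx hy; elim: a => [|a IH]; first by rewrite !expr0 subrr nc0 mul0r mul0r.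
have -> : x ^+ a.+1 - y ^+ a.+1 = x * (x ^+ a - y ^+ a) + (x - y) * y ^+ a.
  by rewrite !exprS; ring.
rewrite (le_trans (ncD _ _)) // !ncM ncX.
have r0 : 0 <= r by lra.
have Q0 : 0 <= r ^+ a := exprn_ge0 a r0.
have QQ : r ^+ a <= r ^+ a.+1 by rewrite exprS ler_peMl.
have Y : nc y ^+ a <= r ^+ a by rewrite lerXn2r // ?nnegrE ?nc_ge0.
have h1 : nc x * nc (x ^+ a - y ^+ a) <= r * (a%:R * r ^+ a * nc (x - y)).
  by apply: ler_pM => //; apply: nc_ge0.
have h2 : nc (x - y) * nc y ^+ a <= nc (x - y) * r ^+ a.+1.
  by apply: ler_wpM2l; [apply: nc_ge0| exact: le_trans Y QQ].
rewrite (le_trans (lerD h1 h2)) // exprS -addn1 natrD le_eqVlt; apply/orP; left; apply/eqP; ring.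
Qed.

Lemma ncMon (z z' : C) (r : R) a b : 1 <= r -> nc z <= r -> nc z' <= r ->
  nc (z ^+ a * (z^*) ^+ b - z' ^+ a * (z'^*) ^+ b) <= (a + b)%:R * r ^+ (a + b) * nc (z - z').
Proof.
move=> r1 hz hz'.
have r0 : 0 <= r by lra.
have -> : z ^+ a * (z^*) ^+ b - z' ^+ a * (z'^*) ^+ b =
  z ^+ a * ((z^*) ^+ b - (z'^*) ^+ b) + (z ^+ a - z' ^+ a) * (z'^*) ^+ b by ring.
rewrite (le_trans (ncD _ _)) // !ncM !ncX.
have h1 := @ncXB _ _ _ a r1 hz hz'.
have h2 : nc ((z^*) ^+ b - (z'^*) ^+ b) <= b%:R * r ^+ b * nc (z - z').
  by rewrite -(nc_conj (z - z')) rmorphB; apply: ncXB; rewrite ?nc_conj.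
have X1 : nc z ^+ a <= r ^+ a by rewrite lerXn2r // ?nnegrE ?nc_ge0.
have X2 : nc (z'^*) ^+ b <= r ^+ b by rewrite nc_conj lerXn2r // ?nnegrE ?nc_ge0.
have e1 := ler_pM (exprn_ge0 _ (nc_ge0 _)) (nc_ge0 _) X1 h2.
have e2 := ler_pM (nc_ge0 _) (exprn_ge0 _ (nc_ge0 _)) h1 X2.
rewrite (le_trans (lerD e1 e2)) // natrD exprD le_eqVlt; apply/orP; left; apply/eqP; ring.
Qed.


Lemma exX t k : ex t ^+ k = ex (k%:R * t).
Proof.
elim: k => [|k IH]; first by rewrite expr0 mul0r ex0.
by rewrite exprS IH -exD -{1}(mul1r t) -mulrDl -natr1 addrC.
Qed.

Lemma conj_real (x : R) : ((x%:C)%C : C)^* = (x%:C)%C.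
Proof. by apply/eqP; rewrite eq_complex /= oppr0 !eqxx. Qed.

Lemma nc_realM (x : R) (u : C) : 0 <= x -> nc u = 1 -> nc ((x%:C)%C * u) = x.
Proof. by move=> x0 hu; rewrite ncM nc_real hu mulr1 ger0_norm. Qed.

Lemma ex_cont (e : R) : 0 < e -> exists2 k, 0 < k & forall t, `|t| < k -> nc (ex t - 1) <= e.
Proof.
move=> e0.
have e2 : 0 < e / 2 by lra.
have hc : cos x @[x --> (0:R)] --> cos (0:R) by apply: continuous_cos.
have hs : sin x @[x --> (0:R)] --> sin (0:R) by apply: continuous_sin.
move/cvgrPdist_lt: hc => /(_ _ e2) /nbhs_ballP [k1 k10 hk1].
move/cvgrPdist_lt: hs => /(_ _ e2) /nbhs_ballP [k2 k20 hk2].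
exists (Num.min k1 k2); first by rewrite lt_min k10 k20.
move=> t ht.
have t1 : ball (0 : R) k1 t.
  by rewrite -ball_normE /= sub0r normrN; apply: lt_le_trans ht _; rewrite ge_min lexx.
have t2 : ball (0 : R) k2 t.
  by rewrite -ball_normE /= sub0r normrN; apply: lt_le_trans ht _; rewrite ge_min lexx orbT.
have h1 := hk1 _ t1; have h2 := hk2 _ t2; rewrite /= cos0 sin0 in h1 h2.
have -> : ex t - 1 = Complex (cos t - 1) (sin t) by apply/eqP; rewrite eq_complex /= subr0 !eqxx.
rewrite (le_trans (nc_le _ _)) //.
rewrite sub0r normrN in h2; rewrite distrC in h1; lra.
Qed.

End Ang.

Section Poly.
Variable R : realType.
Local Notation C := R[i].
Local Notation Re := (@complex.Re R).
Local Notation Im := (@complex.Im R).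
Local Notation nc := (@Normc.normc R).
Variable n : nat.
Variable alpha : nat -> nat -> C.
Local Notation P := (polyan_eval n alpha).

Definition Lc (r : R) := \sum_(k < n.+1) \sum_(j < k.+1) nc (alpha j (k - j)%N) * (k%:R * r ^+ k).

Lemma P_lip (z z' : C) (r : R) : 1 <= r -> nc z <= r -> nc z' <= r ->
  nc (P z - P z') <= Lc r * nc (z - z').
Proof.
move=> r1 hz hz'.
rewrite /polyan_eval -sumrB (le_trans (nc_sum _ _ _ _)) // /Lc mulr_suml.
apply: ler_sum => k _.
rewrite -sumrB (le_trans (nc_sum _ _ _ _)) // mulr_suml; apply: ler_sum => j _.
set m := (k - j)%N.
have -> : alpha j m * z ^+ j * z^* ^+ m - alpha j m * z' ^+ j * z'^* ^+ m =
  alpha j m * (z ^+ j * z^* ^+ m - z' ^+ j * z'^* ^+ m) by ring.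
rewrite ncM -mulrA ler_wpM2l ?nc_ge0 //.
have jk : (j + m)%N = k by rewrite subnKC // -ltnS.
by have := @ncMon _ _ _ r j m r1 hz hz'; rewrite jk.
Qed.


Lemma Lc_ge0 r : 0 <= r -> 0 <= Lc r.
Proof.
move=> r0; apply: sumr_ge0 => k _; apply: sumr_ge0 => j _.
by apply: mulr_ge0; [apply: nc_ge0 | apply: mulr_ge0; [apply: ler0n | apply: exprn_ge0]].
Qed.

Lemma P_unif (r eps : R) : 1 <= r -> 0 < eps -> exists2 eta, 0 < eta &
  forall z z', nc z <= r -> nc z' <= r -> nc (z - z') <= eta -> nc (P z - P z') <= eps.
Proof.
move=> r1 e0; have L0 : 0 <= Lc r by apply: Lc_ge0; lra.
exists (eps / (Lc r + 1)); first by apply: divr_gt0 => //; lra.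
move=> z z' hz hz' hd; rewrite (le_trans (@P_lip z z' r r1 hz hz')) //.
have L1 : 0 < Lc r + 1 by lra.
have h1 : Lc r * nc (z - z') <= Lc r * (eps / (Lc r + 1)) := ler_wpM2l L0 hd.
have h2 : Lc r * (eps / (Lc r + 1)) <= eps.
  by rewrite mulrA ler_pdivrMr //; nra.
exact: le_trans h1 h2.
Qed.

Lemma nc_rev (a b : C) : `|nc a - nc b| <= nc (a - b).
Proof.
have h1 := ncD (a - b) b; have h2 := ncD (b - a) a.
rewrite subrK in h1; rewrite subrK ncB in h2.
rewrite ler_norml; apply/andP; split; lra.
Qed.

Definition F (p : R * R) : R := nc (P (Complex p.1 p.2)).

Lemma F_cont : continuous F.
Proof.
move=> p; apply/cvgrPdist_lt => e e0.
pose r := `|p.1| + `|p.2| + 2.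
have r1 : 1 <= r by rewrite /r; have := normr_ge0 p.1; have := normr_ge0 p.2; lra.
have e2 : 0 < e / 2 by lra.
have [eta eta0 Heta] := @P_unif r (e / 2) r1 e2.
pose d := Num.min 1 (eta / 2).
have d0 : 0 < d by rewrite lt_min ltr01 /=; lra.
exists (ball p.1 d, ball p.2 d); first by split; apply: nbhsx_ballx.
case=> q1 q2 [/= h1 h2].
rewrite -ball_normE /= in h1 h2.
have d1 : d <= 1 by rewrite /d ge_min lexx.
have d2 : d <= eta / 2 by rewrite /d ge_min lexx orbT.
have n1 : `|q1| <= `|p.1| + 1.
  have := ler_normB p.1 (p.1 - q1); have -> : p.1 - (p.1 - q1) = q1 by ring.
  lra.
have n2 : `|q2| <= `|p.2| + 1.
  have := ler_normB p.2 (p.2 - q2); have -> : p.2 - (p.2 - q2) = q2 by ring.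
  lra.
have hz : nc (Complex p.1 p.2) <= r by rewrite (le_trans (nc_le _ _)) // /r; lra.
have hq : nc (Complex q1 q2) <= r by rewrite (le_trans (nc_le _ _)) // /r; lra.
have hd : nc (Complex p.1 p.2 - Complex q1 q2) <= eta.
  have -> : Complex p.1 p.2 - Complex q1 q2 = Complex (p.1 - q1) (p.2 - q2) by [].
  rewrite (le_trans (nc_le _ _)) //; lra.
have := Heta _ _ hz hq hd.
have := nc_rev (P (Complex p.1 p.2)) (P (Complex q1 q2)).
rewrite /F /=; lra.
Qed.



Lemma P_lb (r : R) : 0 <= r -> (forall z, P z != 0) ->
  exists2 delta, 0 < delta & forall z, nc z <= r -> delta <= nc (P z).
Proof.
move=> r0 nz.
pose A : set (R * R) := (`[- r, r]%classic `*` `[- r, r]%classic)%classic.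
have A0 : (A !=set0)%classic.
  by exists (0, 0); rewrite /A /=; split; rewrite /= in_itv /=; lra.
have cA : compact A by apply: compact_setX; apply: segment_compact.
have cF : {within A, continuous F} by apply: continuous_subspaceT; exact: F_cont.
have [c cA' hc] := compact_EVT_min A0 cA cF.
exists (F c); first by rewrite lt0r nc_ge0 nc_eq0 nz.
case=> a b hz.
have -> : P (Complex a b) = P (Complex (a, b).1 (a, b).2) by [].
apply: (hc (a, b)).
have ha := ncRe (Complex a b).
have hb : `|b| <= nc (Complex a b).
  by rewrite /= -sqrtr_sqr ler_wsqrtr // lerDr sqr_ge0.
rewrite inE /A /=; split; rewrite /= in_itv /=; apply/andP; split.
all: move: ha hb; rewrite /= => ha hb.
all: have := ler_norm a; have := ler_norm (- a); have := ler_norm b; have := ler_norm (- b); rewrite !normrN.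
all: simpl in *; lra.
Qed.


Lemma nc_term (z : C) j m : nc (alpha j m * z ^+ j * z^* ^+ m) = nc (alpha j m) * nc z ^+ (j + m).
Proof. by rewrite !ncM !ncX nc_conj exprD mulrA. Qed.

Lemma P_dom l : (1 <= n)%N -> (l <= n)%N ->
  \sum_(j < n.+1 | j != l :> nat) nc (alpha j (n - j)%N) < nc (alpha l (n - l)%N) ->
  exists2 R0, 1 <= R0 & forall z, nc z = R0 ->
    nc (P z - alpha l (n - l)%N * z ^+ l * z^* ^+ (n - l)) <
    nc (alpha l (n - l)%N * z ^+ l * z^* ^+ (n - l)).
Proof.
move=> n1 ln hdom.
set a := nc (alpha l (n - l)%N) in hdom *.
set s := \sum_(j < n.+1 | j != l :> nat) nc (alpha j (n - j)%N) in hdom.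
pose A := \sum_(k < n) \sum_(j < k.+1) nc (alpha j (k - j)%N).
have A0 : 0 <= A.
  by apply: sumr_ge0 => k _; apply: sumr_ge0 => j _; apply: nc_ge0.
have s0 : 0 <= s by apply: sumr_ge0 => j _; apply: nc_ge0.
pose R0 := Num.max 1 ((A + 1) / (a - s)).
have R01 : 1 <= R0 by rewrite /R0 le_max lexx.
have as0 : 0 < a - s by lra.
have R0A : A + 1 <= (a - s) * R0.
  by rewrite mulrC -ler_pdivrMr // /R0 le_max lexx orbT.
exists R0 => // z hz.
have lt : (l < n.+1)%N by [].
rewrite /polyan_eval big_ord_recr /= (bigD1 (Ordinal lt)) //=.
set X := \sum_(i < n) _.
set Y := \sum_(i < n.+1 | i != Ordinal lt) _.
set T := alpha l (n - l)%N * _ * _.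
have -> : X + (T + Y) - T = X + Y by rewrite addrCA addrAC subrr add0r.
rewrite /T nc_term subnKC // hz.
pose Q := R0 ^+ n.-1.
have RQ : R0 ^+ n = R0 * Q by rewrite /Q -exprS prednK.
have Q1 : 1 <= Q by apply: exprn_ege1.
have hX : nc X <= A * Q.
  apply: (le_trans (nc_sum _ _ _ _)).
  rewrite /A mulr_suml; apply: ler_sum => k _.
  apply: (le_trans (nc_sum _ _ _ _)).
  rewrite mulr_suml; apply: ler_sum => j _.
  have jk : (j <= k)%N by rewrite -ltnS.
  rewrite nc_term subnKC // hz ler_wpM2l ?nc_ge0 // ler_weXn2l //.
  by rewrite -ltnS prednK.
have hY : nc Y <= s * R0 ^+ n.
  apply: (le_trans (nc_sum _ _ _ _)).
  rewrite /s mulr_suml.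
  rewrite (eq_bigl (fun j : 'I_n.+1 => j != l :> nat)) //.
  apply: ler_sum => j _.
  have jk : (j <= n)%N by rewrite -ltnS.
  by rewrite nc_term subnKC // hz.
rewrite -/a (le_lt_trans (ncD _ _)) // RQ.
rewrite RQ in hY.
have h1 : A * Q < (a - s) * R0 * Q by rewrite ltr_pM2r; lra.
have e1 : (a - s) * R0 * Q = a * (R0 * Q) - s * (R0 * Q) by ring.
lra.
Qed.

End Poly.
Lemma natdist (R : realType) (a b : nat) : a != b -> 1 <= `|a%:R - b%:R : R|.
Proof.
move=> ab; case: (ltngtP a b) => h; last by rewrite h eqxx in ab.
- rewrite distrC ger0_norm; last by rewrite subr_ge0 ler_nat ltnW.
  by rewrite -natrB ?ler1n ?subn_gt0 // ltnW.
- rewrite ger0_norm; last by rewrite subr_ge0 ler_nat ltnW.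
  by rewrite -natrB ?ler1n ?subn_gt0 // ltnW.
Qed.

Section Main.
Variable R : realType.
Local Notation C := R[i].
Local Notation Re := (@complex.Re R).
Local Notation Im := (@complex.Im R).
Local Notation nc := (@Normc.normc R).
Variable n : nat.
Variable alpha : nat -> nat -> C.
Local Notation P := (polyan_eval n alpha).

Lemma exists_zero l : (1 <= n)%N -> (l <= n)%N -> (2 * l != n)%N ->
  \sum_(j < n.+1 | j != l :> nat) nc (alpha j (n - j)%N) < nc (alpha l (n - l)%N) ->
  exists z, P z = 0.
Proof.
move=> n1 ln l2 hdom.
case: (pselect (exists z, P z = 0)) => // hno; exfalso.
have nz : forall z, P z != 0 by move=> z; apply/eqP => h; apply: hno; exists z.
have [R0 R01 Hdom] := @P_dom _ n alpha l n1 ln hdom.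
have R00 : 0 <= R0 by lra.
have R0p : 0 < R0 by lra.
have [dl dl0 Hdl] := @P_lb _ n alpha R0 R00 nz.
have dl4 : 0 < dl / 4 by lra.
have [eta eta0 Heta] := @P_unif _ n alpha R0 (dl / 4) R01 dl4.
pose e0 := Num.min (eta / R0) (1/4).
have e00 : 0 < e0 by rewrite lt_min divr_gt0 //=; lra.
have e0a : e0 <= eta / R0 by rewrite ge_min lexx.
have e0b : e0 <= 1/4 by rewrite ge_min lexx orbT.
have [k k0 Hk] := ex_cont _ e00.
pose d : R := (2 * l)%:R - n%:R.
have D1 : 1 <= `|d| by apply: natdist.
have pi0 := pi_gt0 R.
pose k' := Num.min k (pi / 2).
have k'0 : 0 < k' by rewrite lt_min k0 /=; lra.
have k'a : k' <= k by rewrite ge_min lexx.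
have k'b : k' <= pi / 2 by rewrite ge_min lexx orbT.
pose K := pi *+ 2 * `|d| / k'.
pose N := (Num.trunc K).+1.
have hN : K < N%:R by apply: truncnS_gt.
pose th : R := pi *+ 2 / N%:R.
have N0 : 0 < N%:R :> R by rewrite ltr0n.
have th0 : 0 < th by rewrite divr_gt0 // mulrn_wgt0.
have Nth : N%:R * th = pi *+ 2 by rewrite /th mulrC divfK // lt0r_neq0.
have thd : `|th * d| < k'.
  rewrite normrM (gtr0_norm th0) /th mulrAC ltr_pdivrMr //.
  by rewrite -ltr_pdivrMl // mulrC.
clearbody th.
have thk : `|th| < k.
  apply: le_lt_trans (lt_le_trans thd k'a).
  rewrite [X in _ <= X]normrM; apply: ler_peMr; [exact: normr_ge0 | exact: D1].
pose u (j : nat) := ex (j%:R * th).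
have uN : u N = u 0%N by rewrite /u Nth ex2pi mul0r ex0.
have nu : forall j, nc (u j) = 1 by move=> j; apply: nc_ex.
have uS : forall j, u j.+1 = u j * ex th by move=> j; rewrite /u -exD -natr1 mulrDl mul1r.
pose M := (Num.trunc (R0 / eta)).+1.
have hM : R0 / eta < M%:R by apply: truncnS_gt.
have M0 : 0 < M%:R :> R by rewrite ltr0n.
pose h : R := R0 / M%:R.
have h0 : 0 < h by rewrite divr_gt0.
have heta : h <= eta.
  rewrite /h ler_pdivrMr // mulrC -ler_pdivrMr //; exact: ltW.
have MhR : M%:R * h = R0 by rewrite /h mulrC divfK // lt0r_neq0.
pose A (m j : nat) := P ((((m%:R * h)%:C)%C : C) * u j).
have rm : forall m, (m <= M)%N -> 0 <= m%:R * h <= R0.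
  move=> m mM; apply/andP; split; first by rewrite mulr_ge0 ?ler0n ?ltW.
  rewrite -MhR; apply: ler_wpM2r; [exact: ltW | by rewrite ler_nat].
have nzm : forall m j, (m <= M)%N -> nc (((m%:R * h)%:C)%C * u j) <= R0.
  by move=> m j mM; have /andP[r0 r1] := rm m mM; rewrite nc_realM.
have stepj : forall m, (m <= M)%N -> forall j, (j < N)%N -> nc (A m j.+1 / A m j - 1) <= 1/4.
  move=> m mM j jN; apply: ratio_close; first exact: nz.
  have /andP[r0 r1] := rm m mM.
  have hd : nc (((m%:R * h)%:C)%C * u j.+1 - ((m%:R * h)%:C)%C * u j) <= eta.
    have -> : ((m%:R * h)%:C)%C * u j.+1 - ((m%:R * h)%:C)%C * u j =
       ((m%:R * h)%:C)%C * u j * (ex th - 1) by rewrite uS; ring.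
    rewrite ncM nc_realM //.
    have hk := Hk th thk.
    have : m%:R * h * nc (ex th - 1) <= R0 * e0.
      by apply: ler_pM => //; apply: nc_ge0.
    have : R0 * e0 <= eta.
      by rewrite mulrC -ler_pdivlMr.
    lra.
  have := Heta _ _ (nzm m j.+1 mM) (nzm m j mM) hd.
  have := Hdl _ (nzm m j mM).
  rewrite /A; lra.
have stepm : forall m, (m < M)%N -> forall j, 0 < Re (A m.+1 j / A m j).
  move=> m mM j; apply: Re_gt0.
  have mM' : (m <= M)%N := ltnW mM.
  have hd : nc (((m.+1%:R * h)%:C)%C * u j - ((m%:R * h)%:C)%C * u j) <= eta.
    have -> : ((m.+1%:R * h)%:C)%C * u j - ((m%:R * h)%:C)%C * u j = ((h%:C)%C : C) * u j.
      rewrite /u /ex; apply/eqP; rewrite eq_complex /=; apply/andP; split; apply/eqP;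
        rewrite -natr1; ring.
    by rewrite nc_realM // ltW.
  have h1 := Heta _ _ (nzm m.+1 j mM) (nzm m j mM') hd.
  have h2 := Hdl _ (nzm m j mM').
  have : nc (A m.+1 j / A m j - 1) <= 1/4.
    by apply: ratio_close; [exact: nz | rewrite /A; lra].
  lra.
have hclosed : forall m, A m N = A m 0%N by move=> m; rewrite /A uN.
have chain : forall m, (m <= M)%N -> wind N (A m) = 0.
  elim=> [|m IH] mM.
    apply: (@wind_const _ _ _ (P 0)); first exact: nz.
    by move=> i _; rewrite /A mul0r mul0r.
  rewrite -(IH (ltnW mM)); symmetry; apply: wind_stable => //.
  - by move=> i _; apply: nz.
  - by move=> i _; apply: nz.
  - exact: stepj (ltnW mM).
  - exact: stepj mM.
  - by move=> i _; apply: stepm.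
pose c : C := alpha l (n - l)%N * (((R0%:C)%C : C) ^+ n).
pose g (j : nat) := c * ex (j%:R * (th * d)).
have hg : forall j, alpha l (n - l)%N * (((R0%:C)%C : C) * u j) ^+ l *
    (((R0%:C)%C : C) * u j)^* ^+ (n - l) = g j.
  have cz : forall w : C, (((R0%:C)%C : C) * w)^* = ((R0%:C)%C : C) * w^*.
    by case=> a b; apply/eqP; rewrite eq_complex /=; apply/andP; split; apply/eqP; ring.
  move=> j; rewrite cz /u conj_ex !exprMn !exX /g /c.
  have e1 : ((R0%:C)%C : C) ^+ n = ((R0%:C)%C : C) ^+ l * ((R0%:C)%C : C) ^+ (n - l).
    by rewrite -exprD subnKC.
  have e2 : ex (j%:R * (th * d)) = ex (l%:R * (j%:R * th)) * ex ((n - l)%:R * - (j%:R * th)).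
    by rewrite -exD natrB // /d natrM; congr ex; ring.
  rewrite e1 e2; ring.
have a0 : alpha l (n - l)%N != 0.
  rewrite -nc_eq0; apply: lt0r_neq0; apply: le_lt_trans hdom.
  by apply: sumr_ge0 => j _; apply: nc_ge0.
have R0C : ((R0%:C)%C : C) != 0 by rewrite -nc_eq0 nc_real gtr0_norm // lt0r_neq0.
have c0 : c != 0 by rewrite mulf_neq0 // expf_neq0.
have thdr : - (pi / 2) < th * d < pi / 2.
  by move: thd; rewrite ltr_norml => /andP[t1 t2]; apply/andP; split; lra.
have windg : wind N g = N%:R * (th * d) by apply: wind_ex.
have gnz : forall j, g j != 0 by move=> j; rewrite mulf_neq0 // ex_neq0.
have windA : wind N g = wind N (A M).
  apply: wind_stable => //.
  - by rewrite -!hg uN.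
  - by move=> i _; apply: nz.
  - move=> i _.
    have -> : g i.+1 / g i = ex (th * d).
      rewrite /g -natr1 mulrDl mul1r exD.
      have := ex_neq0 (i%:R * (th * d)); move=> e0'.
      by field; rewrite c0 e0'.
    apply: le_trans (Hk _ (lt_le_trans thd k'a)) e0b.
  - exact: stepj (leqnn M).
  - move=> i _; apply: Re_gt0.
    have hz : nc (((R0%:C)%C : C) * u i) = R0 by rewrite nc_realM.
    have := Hdom _ hz; rewrite hg => hlt.
    have -> : A M i = P (((R0%:C)%C : C) * u i) by rewrite /A MhR.
    have gp : 0 < nc (g i) by rewrite lt0r nc_ge0 nc_eq0 gnz.
    have -> : P (((R0%:C)%C : C) * u i) / g i - 1 = (P (((R0%:C)%C : C) * u i) - g i) / g i.
      by field; rewrite gnz.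
    by rewrite ncM ncV ltr_pdivrMr // mul1r.
have := chain M (leqnn M); rewrite -windA windg mulrA Nth => /eqP.
rewrite mulf_eq0 => /orP[|/eqP d0].
  by rewrite mulrn_eq0 /= (gt_eqF pi0).
by move: D1; rewrite d0 normr0 ler10.
Qed.
End Main.

Lemma normE_C (R : realType) (x : R[i]) : `|x| = ((Normc.normc x)%:C)%C.
Proof. by []. Qed.

Theorem theorem2p5 (R : realType) (n : nat) (alpha : nat -> nat -> R[i]) :
  (1 <= n)%N ->
  ((exists2 l : nat, (l <= n)%N /\ (2 * l != n)%N &
      \sum_(j < n.+1 | j != l :> nat) `|alpha j (n - j)%N|
        < `|alpha l (n - l)%N|) ->
    exists z : R[i], polyan_eval n alpha z = 0)
  /\
  (forall l : nat, (l <= n)%N -> (2 * l != n)%N -> alpha l (n - l)%N != 0 ->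
    (forall j : nat, (j <= n)%N -> j != l -> alpha j (n - j)%N = 0) ->
    exists z : R[i], polyan_eval n alpha z = 0).
Proof.
move=> n1.
have key : forall l, (l <= n)%N -> (2 * l != n)%N ->
    \sum_(j < n.+1 | j != l :> nat) Normc.normc (alpha j (n - j)%N)
      < Normc.normc (alpha l (n - l)%N) ->
    exists z : R[i], polyan_eval n alpha z = 0.
  by move=> l ln l2 h; apply: (@exists_zero R n alpha l).
split.
  case=> l [ln l2] h; apply: (key l ln l2).
  move: h; rewrite normE_C.
  under eq_bigr => j _ do rewrite normE_C.
  by rewrite -(raddf_sum (real_complex R)) ltcR.
move=> l ln l2 a0 hz; apply: (key l ln l2).
rewrite big1; first by rewrite lt0r nc_ge0 nc_eq0 a0.
move=> j jl; have jn : (j <= n)%N by rewrite -ltnS ltn_ord.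
by rewrite hz // nc0.
Qed.
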